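(* Let $\mathscr{A},\mathscr{B}$ be $\sigma$-structures and $k>0$. Then $\mathscr{A}\leftrightarrow^{\mathbb{E}}_k\mathscr{B}$ (there is a non-empty locally invertible pair from $\mathscr{A}$ to $\mathscr{B}$) if and only if Duplicator has a winning strategy in the back-and-forth $\mathbb{E}_k$ game between $\mathscr{A}$ and $\mathscr{B}$.
   Context: $\mathbb{E}_k A=A^{\le k}$ is the set of non-empty sequences over $A$ of length $\le k$, forest-ordered by prefix $\sqsubseteq$; add the empty sequence $\bot$ as root; $s\prec s'$ means $s'$ extends $s$ by exactly one element. For any function $f:A^{\le k}\to B$, $f^*:A^{\le k}\to B^{\le k}$ is $f^*[a_1,\dots,a_j]=[f[a_1],f[a_1,a_2],\dots,f[a_1,\dots,a_j]]$ (and $f^*(\bot)=\bot$). $\mathsf{W}_{\mathscr{A},\mathscr{B}}$ is the set of pairs $(s,t)$ with $s=[a_1,\dots,a_j]$, $t=[b_1,\dots,b_j]$ of equal length such that $\{(a_i,b_i)\}$ is a partial isomorphism: $a_i=a_l\iff b_i=b_l$, and for every $n$-ary $R\in\sigma$ and indices $i_1,\dots,i_n$, $R^{\mathscr{A}}(a_{i_1},\dots,a_{i_n})\iff R^{\mathscr{B}}(b_{i_1},\dots,b_{i_n})$. $\mathcal{S}(\mathscr{A},\mathscr{B})$ is the set of functions $f:A^{\le k}\to B$ with $(s,f^*(s))\in\mathsf{W}_{\mathscr{A},\mathscr{B}}$ for all $s\in A^{\le k}$ (such $f$ are homomorphisms $\mathbb{E}_k\mathscr{A}\to\mathscr{B}$,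 where $\mathbb{E}_k\mathscr{A}$ has $R(s_1,\dots,s_n)$ iff the $s_i$ are pairwise prefix-comparable and $R^{\mathscr{A}}$ holds of their last elements). A locally invertible pair from $\mathscr{A}$ to $\mathscr{B}$ is a pair $(F,G)$ with $F\subseteq\mathcal{S}(\mathscr{A},\mathscr{B})$, $G\subseteq\mathcal{S}(\mathscr{B},\mathscr{A})$ such that: for all $f\in F$ and $s\in A^{\le k}$ there is $g\in G$ with $g^*f^*(s)=s$; and for all $g\in G$ and $t\in B^{\le k}$ there is $f\in F$ with $f^*g^*(t)=t$. It is non-empty if $F$ (equivalently $G$) is non-empty. The back-and-forth $\mathbb{E}_k$ game: positions are pairs $(s,t)$, initially $(\bot,\bot)$. In each round, either Spoiler chooses $s'\succ s$ and Duplicator responds with $t'\succ t$, giving $(s',t')$, or Spoiler chooses $t''\succ t$ and Duplicator responds with $s''\succ s$, giving $(s'',t'')$; Duplicator wins the round if the new position is in $\mathsf{W}_{\mathscr{A},\mathscr{B}}$. The game continues while moves are available (at most $k$ rounds); a winning strategy for Duplicator wins every round. *)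

(* Defs.v *)
From mathcomp Require Import all_boot.
From Stdlib Require List.

Set Implicit Arguments.
Unset Strict Implicit.
Unset Printing Implicit Defensive.

Record signature := Signature { sym : Type; arity : sym -> nat }.

Record structure (sg : signature) := Structure {
  carrier :> Type;
  interp : forall R : sym sg, ('I_(arity R) -> carrier) -> Prop }.

Section Defs.
Variable sg : signature.

Definition inE (k : nat) {A : Type} (s : seq A) : Prop := 0 < size s <= k.

(* f^* [a1..aj] = [f[a1], f[a1,a2], ..., f[a1..aj]];  f^*(bot) = bot. *)
Definition fstar {A B : Type} (f : seq A -> B) (s : seq A) : seq B :=
  [seq f (take i s) | i <- iota 1 (size s)].

(* (s,t) in W_{A,B}: equal length and {(a_i,b_i)} is a partial isomorphism. *)
Definition Wpos (MA MB : structure sg) (s : seq MA) (t : seq MB) : Prop :=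
  size s = size t /\
  (forall p q, List.In p (zip s t) -> List.In q (zip s t) ->
      (p.1 = q.1 <-> p.2 = q.2)) /\
  (forall (R : sym sg) (c : 'I_(arity R) -> MA * MB),
      (forall m, List.In (c m) (zip s t)) ->
      (@interp sg MA R (fun m => (c m).1) <-> @interp sg MB R (fun m => (c m).2))).

Definition inS (k : nat) (MA MB : structure sg) (f : seq MA -> MB) : Prop :=
  forall s : seq MA, inE k s -> Wpos s (fstar f s).

Definition loc_inv_pair (k : nat) (MA MB : structure sg)
    (F : (seq MA -> MB) -> Prop) (G : (seq MB -> MA) -> Prop) : Prop :=
  (forall f, F f -> inS k f) /\
  (forall g, G g -> inS k g) /\
  (forall f (s : seq MA), F f -> inE k s ->
      exists g, G g /\ fstar g (fstar f s) = s) /\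
  (forall g (t : seq MB), G g -> inE k t ->
      exists f, F f /\ fstar f (fstar g t) = t).

Definition Ek_equiv (k : nat) (MA MB : structure sg) : Prop :=
  exists F G, @loc_inv_pair k MA MB F G /\ exists f, F f.

(* A Duplicator strategy in the back-and-forth E_k game: given the current
   position (s,t) and Spoiler's move (an element on one side), a response. *)
Record dup_strategy (MA MB : structure sg) := DupStrategy {
  respA : seq MA -> seq MB -> MA -> MB;
  respB : seq MA -> seq MB -> MB -> MA }.

Inductive reachable (k : nat) (MA MB : structure sg) (st : dup_strategy MA MB)
  : seq MA -> seq MB -> Prop :=
| reach_init : reachable k st [::] [::]
| reach_A s t (a : MA) : reachable k st s t -> size s < k ->
    reachable k st (rcons s a) (rcons t (respA st s t a))
| reach_B s t (b : MB) : reachable k st s t -> size t < k ->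
    reachable k st (rcons s (respB st s t b)) (rcons t b).

Definition winning (k : nat) (MA MB : structure sg) (st : dup_strategy MA MB)
  : Prop :=
  forall s t, reachable k st s t -> s <> [::] -> Wpos s t.

Definition dup_wins (k : nat) (MA MB : structure sg) : Prop :=
  exists st : dup_strategy MA MB, winning k st.

End Defs.

(* Main.v *)
Require Import Defs.
From mathcomp Require Import all_boot.
From Stdlib Require Import ClassicalEpsilon.
From Stdlib Require List.
Set Implicit Arguments.
Unset Strict Implicit.

Lemma size_fstar {A B : Type} (f : seq A -> B) s : size (fstar f s) = size s.
Proof. by rewrite /fstar size_map size_iota. Qed.

Lemma fstar_rcons {A B : Type} (f : seq A -> B) s a :
  fstar f (rcons s a) = rcons (fstar f s) (f (rcons s a)).
Proof.
rewrite /fstar size_rcons -[(size s).+1]addn1 iotaD map_cat /= cats1 add1n -(size_rcons s a) take_size.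
congr rcons; apply/eq_in_map => i; rewrite mem_iota => /andP[_ hi].
by rewrite -cats1 takel_cat // -ltnS -add1n.
Qed.

Lemma fstar_take {A B : Type} (f : seq A -> B) s j :
  fstar f (take j s) = take j (fstar f s).
Proof.
rewrite /fstar -map_take take_iota size_take.
have -> : minn j (size s) = (if j < size s then j else size s).
  by [].
apply/eq_in_map => i; rewrite mem_iota => /andP[_ hi].
case: (ltnP j (size s)) hi => hj hi.
  by rewrite take_takel // -ltnS -add1n.
by rewrite (take_oversize (n:=j)).
Qed.

Lemma fstar_char {A B : Type} (g : seq A -> B) (H : seq A -> seq B) :
  H [::] = [::] -> (forall u b, H (rcons u b) = rcons (H u) (g (rcons u b))) ->
  forall u, fstar g u = H u.
Proof.
move=> H0 HS; elim/last_ind => [//|u b IH].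
by rewrite fstar_rcons IH HS.
Qed.

Lemma Wpos_sym sg (MA MB : structure sg) (s : seq MA) (t : seq MB) :
  Wpos s t -> Wpos t s.
Proof.
move=> [hs [hp hr]].
have hz : forall p, List.In p (zip t s) -> List.In (p.2, p.1) (zip s t).
  move=> p; elim: t s {hs hp hr} => [|b t IH] [|a s] //= [<-|h]; [by left|right; exact: IH].
split; first by [].
split.
  move=> p q /hz hp1 /hz hq1; have := hp _ _ hp1 hq1 => /=; tauto.
move=> R c hc; have := hr R (fun m => ((c m).2, (c m).1)) (fun m => hz _ (hc m)) => /=; tauto.
Qed.
Definition swap_st sg (MA MB : structure sg) (st : dup_strategy MA MB) : dup_strategy MB MA :=
  DupStrategy (fun t s b => respB st s t b) (fun t s a => respA st s t a).

Lemma reach_swap sg (MA MB : structure sg) k (st : dup_strategy MA MB) s t :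
  reachable k st s t -> reachable k (swap_st st) t s.
Proof.
elim => [|s' t' a _ IH h|s' t' b _ IH h].
- exact: reach_init.
- exact: (@reach_B _ _ _ _ (swap_st st) t' s' a IH).
- exact: (@reach_A _ _ _ _ (swap_st st) t' s' b IH).
Qed.

Lemma reach_size sg (MA MB : structure sg) k (st : dup_strategy MA MB) s t :
  reachable k st s t -> size s = size t /\ size s <= k.
Proof.
elim => [|s' t' a _ [IH1 IH2] h|s' t' b _ [IH1 IH2] h]; rewrite ?size_rcons //.
- by split; [rewrite IH1|].
- by split; [rewrite IH1|rewrite IH1].
Qed.

Definition pre {B : Type} (t p : seq B) : Prop := size p <= size t /\ take (size p) t = p.

Definition stepB sg (MA MB : structure sg) (st : dup_strategy MA MB) (s : seq MA) (t : seq MB)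
  (x : seq MA) (p : seq MB) (b : MB) : seq MA :=
  if excluded_middle_informative (pre t (rcons p b)) then take (size p).+1 s
  else rcons x (respB st x p b).

Fixpoint hB sg (MA MB : structure sg) (st : dup_strategy MA MB) (s : seq MA) (t : seq MB)
  (x : seq MA) (p : seq MB) (u : seq MB) : seq MA :=
  match u with [::] => x | b :: u' => hB st s t (stepB st s t x p b) (rcons p b) u' end.

Lemma hB_rcons sg (MA MB : structure sg) (st : dup_strategy MA MB) s t u x p b :
  hB st s t x p (rcons u b) = stepB st s t (hB st s t x p u) (p ++ u) b.
Proof.
elim: u x p => [|c u IH] x p /=; first by rewrite cats0.
by rewrite IH cat_rcons.
Qed.

Lemma core sg (MA MB : structure sg) k (st : dup_strategy MA MB) (a0 : MA)
  (s : seq MA) (t : seq MB) :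
  size s = size t ->
  (forall j, j <= size s -> reachable k st (take j s) (take j t)) ->
  exists g : seq MB -> MA,
    (forall u, size u <= k -> reachable k st (fstar g u) u) /\ fstar g t = s.
Proof.
move=> hst hpre.
pose H u := hB st s t [::] [::] u.
have HS : forall u b, H (rcons u b) = stepB st s t (H u) u b by move=> u b; rewrite /H hB_rcons.
have Inv : forall u, size (H u) = size u /\ (pre t u -> H u = take (size u) s).
  elim/last_ind => [|u b [IH1 IH2]]; first by split => // _; rewrite take0.
  rewrite HS /stepB; case: excluded_middle_informative => hp /=.
    rewrite size_take size_rcons; split; last by [].
    move: hp => [hp1 _]; rewrite size_rcons hst in hp1 *.
    by rewrite ltn_neqAle hp1 andbT; case: eqP => [->|].
  by rewrite !size_rcons IH1.
have Hst : forall u b, exists y, H (rcons u b) = rcons (H u) y.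
  move=> u b; rewrite HS /stepB; case: excluded_middle_informative => hp /=; last by eexists.
  have [hp1 hp2] := hp.
  have hu : pre t u.
    rewrite size_rcons in hp1 hp2; split; first exact: ltnW.
    by rewrite -(take_takel t (leqnSn (size u))) hp2 -cats1 takel_cat // take_size.
  rewrite (proj2 (Inv u) hu); exists (nth a0 s (size u)).
  by rewrite (take_nth a0) // hst -(size_rcons u b).
pose g u := last a0 (H u).
have Hf : forall u, fstar g u = H u.
  apply: fstar_char => // u b; rewrite /g; have [y ->] := Hst u b.
  by rewrite last_rcons.
exists g; split.
  elim/last_ind => [_|u b IH hk]; first by rewrite Hf; exact: reach_init.
  rewrite size_rcons in hk.
  rewrite Hf HS /stepB; case: excluded_middle_informative => hp /=.
    have [hp1 hp2] := hp; rewrite size_rcons in hp1 hp2.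
    rewrite -hp2; apply: hpre; by rewrite hst.
  rewrite -Hf; apply: reach_B; first by apply: IH; exact: ltnW.
  exact: hk.
rewrite Hf; have := proj2 (Inv t); rewrite -hst take_size; apply.
by split => //; rewrite take_size.
Qed.

Lemma pref_ok sg (MA MB : structure sg) k (st : dup_strategy MA MB) (f : seq MA -> MB) s :
  (forall s, Defs.inE k s -> reachable k st s (fstar f s)) -> size s <= k ->
  forall j, j <= size s -> reachable k st (take j s) (take j (fstar f s)).
Proof.
move=> hF hs [|j] hj; first by rewrite !take0; exact: reach_init.
rewrite -fstar_take; apply: hF; rewrite /Defs.inE size_takel //.
by rewrite ltn0Sn /=; exact: leq_trans hj hs.
Qed.

Lemma back sg (MA MB : structure sg) k (a0 : MA) (b0 : MB) (st : dup_strategy MA MB) :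
  winning k st -> Ek_equiv k MA MB.
Proof.
case: st => rA rB; set st := DupStrategy rA rB => win.
have unsw : forall x y, reachable k (swap_st st) y x -> reachable k st x y.
  by move=> x y h; exact: (reach_swap h).
pose F := fun f : seq MA -> MB => forall s, Defs.inE k s -> reachable k st s (fstar f s).
pose G := fun g : seq MB -> MA => forall u, Defs.inE k u -> reachable k st (fstar g u) u.
have ne : forall T (x : seq T), Defs.inE k x -> x <> [::].
  by move=> T x /andP[h _] e; rewrite e in h.
exists F, G; split; last first.
  have [f [hf _]] := @core _ _ _ k (swap_st st) b0 [::] [::] erefl
     (fun j _ => reach_init _ _).
  exists f => s /andP[_ hs]; apply: unsw; exact: hf.
split.
  move=> f hf s hs; apply: win; [exact: hf | exact: ne].
split.
  move=> g hg u hu; apply: Wpos_sym; apply: win; first exact: hg.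
  by case: u hu => [|x u] hu; [move=> _; exact: (ne _ _ hu) | ].
split.
  move=> f s hf hs.
  have hsk : size s <= k by case/andP: hs.
  have [g [hg1 hg2]] := @core _ _ _ k st a0 _ _ (esym (size_fstar f s)) (pref_ok hf hsk).
  exists g; split => // u /andP[_ hu]; exact: hg1.
move=> g t hg ht.
have htk : size t <= k by case/andP: ht.
have hg' : forall u, Defs.inE k u -> reachable k (swap_st st) u (fstar g u).
  by move=> u hu; apply: reach_swap; exact: hg.
have [f [hf1 hf2]] := @core _ _ _ k (swap_st st) b0 _ _ (esym (size_fstar g t)) (pref_ok hg' htk).
exists f; split => // s /andP[_ hs]; apply: unsw; exact: hf1.
Qed.

Lemma forth sg (MA MB : structure sg) k (a0 : MA) (b0 : MB) (hk : 0 < k) :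
  Ek_equiv k MA MB -> dup_wins k MA MB.
Proof.
move=> [F [G [[hFS [hGS [hFG hGF]]] [f0 hf0]]]].
have iF : inhabited (seq MA -> MB) by constructor; exact: (fun _ => b0).
have iG : inhabited (seq MB -> MA) by constructor; exact: (fun _ => a0).
pose cf s t := epsilon iF (fun f => F f /\ fstar f s = t).
pose cg s t := epsilon iG (fun g => G g /\ fstar g t = s).
pose st := DupStrategy (fun s t a => cf s t (rcons s a)) (fun s t b => cg s t (rcons t b)).
pose Inv s t := (exists f, F f /\ fstar f s = t) /\ (exists g, G g /\ fstar g t = s).
have hinv : forall s t, reachable k st s t -> Inv s t /\ size s <= k.
  move=> s t; elim => [|s' t' a _ [[[f [hf e]] _] hs] h|s' t' b _ [[_ [g [hg e]]] hs] h].
  - split=> //; split; first by exists f0.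
    have h1 : Defs.inE k [:: a0] by rewrite /Defs.inE /= hk.
    have [g [hg _]] := hFG f0 [:: a0] hf0 h1.
    by exists g.
  - have [hf' e'] : F (cf s' t') /\ fstar (cf s' t') s' = t'.
      exact: (epsilon_spec iF (fun f => F f /\ fstar f s' = t') (ex_intro _ f (conj hf e))).
    have hin : Defs.inE k (rcons s' a) by rewrite /Defs.inE size_rcons.
    split; last by rewrite size_rcons.
    split; first by exists (cf s' t'); rewrite fstar_rcons e'.
    have [g [hg hgf]] := hFG _ _ hf' hin.
    have ee : fstar (cf s' t') (rcons s' a) = rcons t' (respA st s' t' a) by rewrite fstar_rcons e'.
    by exists g; rewrite -ee.
  - have [hg' e'] : G (cg s' t') /\ fstar (cg s' t') t' = s'.
      exact: (epsilon_spec iG (fun g => G g /\ fstar g t' = s') (ex_intro _ g (conj hg e))).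
    have ht : size t' = size s' by rewrite -e' size_fstar.
    have hin : Defs.inE k (rcons t' b) by rewrite /Defs.inE size_rcons.
    split; last by rewrite size_rcons -ht.
    split; last by exists (cg s' t'); rewrite fstar_rcons e'.
    have [f [hf hfg]] := hGF _ _ hg' hin.
    have ee : fstar (cg s' t') (rcons t' b) = rcons s' (respB st s' t' b) by rewrite fstar_rcons e'.
    by exists f; rewrite -ee.
exists st => s t hr hne.
have [[[f [hf e]] _] hs] := hinv s t hr.
rewrite -e; apply: hFS => //; rewrite /Defs.inE hs andbT.
by case: s hne {hr hs e} => [|x s'].
Qed.

Theorem mainTheorem6 (sg : signature) (MA MB : structure sg) (k : nat)
  (hA : inhabited MA) (hB : inhabited MB) (hk : 0 < k) :
  Ek_equiv k MA MB <-> dup_wins k MA MB.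
Proof.
case: hA => a0; case: hB => b0; split; first exact: forth.
by move=> [st hst]; exact: back a0 b0 st hst.
Qed.
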